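(* Let $T,M,\delta,\tau$ be as in the setup and $\xi>0$. Consider the Batch procedure: set $W=W'=V_T$; while $W'\neq\emptyset$: let $L(W')=\{v\in W':C_{W'}(v)\le k(1+\xi)\tau(W')/|W'|\}$, set $W'\leftarrow W'\setminus L(W')$, and if $W'\neq\emptyset$ and $\rho(W')\ge\rho(W)$ set $W\leftarrow W'$. Output $W$. Then in every iteration $L(W')\neq\emptyset$ (so the procedure terminates), and the output satisfies $\rho(W)\ge\frac{1}{k(1+\xi)}\mathrm{OPT}$.
   Context: Setup. A temporal network is a pair $T=(V_T,E_T)$ where $V_T$ is a finite set of $n$ vertices and $E_T$ is a finite set of temporal edges $(u,v,t)$ with $u,v\in V_T$ and timestamp $t\in\mathbb{R}_{>0}$; timestamps are assumed distinct. A $k$-vertex $\ell$-edge temporal motif ($k,\ell\ge 2$) is a pair $M=(K,\sigma)$ where $K=(V_K,E_K)$ is a directed, weakly connected multigraph with $|V_K|=k$, $|E_K|=\ell$, and $\sigma$ is an ordering of $E_K$; equivalently $M$ is the sequence $\langle(x_1,y_1),\dots,(x_\ell,y_\ell)\rangle$ of its edges in the order $\sigma$. Given $\delta>0$, a $\delta$-instance of $M$ in a temporal network is a sequence $S=\langle(x'_1,y'_1,t'_1),\dots,(x'_\ell,y'_\ell,t'_\ell)\rangle$ of $\ell$ distinct temporal edges of that network with $t'_1<\dots<t'_\ell$ such that (1) there is a bijection $h$ from the set of vertices appearing in $S$ onto $V_K$ with $h(x'_i)=x_i$ and $h(y'_i)=y_i$ for all $i\in[\ell]$, and (2) $t'_\ell-t'_1\le\delta$.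 We write $v\in S$ if $v$ is an endpoint of some edge of $S$; every $\delta$-instance contains exactly $k$ vertices. For $W\subseteq V_T$, $T[W]=(W,\{(u,v,t)\in E_T:u,v\in W\})$ is the induced temporal subnetwork and $\mathcal{S}_W$ is the set of $\delta$-instances of $M$ in $T[W]$. A weighting function $\tau$ assigns a weight $\tau(S)>0$ to each $\delta$-instance $S$ of $M$ in $T$; for $W\subseteq V_T$, $\tau(W)=\sum_{S\in\mathcal{S}_W}\tau(S)$. The temporal motif degree of $v$ in $T[W]$ is $C_W(v)=\sum_{S\in\mathcal{S}_W:\,v\in S}\tau(S)$. The density of a nonempty $W\subseteq V_T$ is $\rho(W)=\tau(W)/|W|$, and $\mathrm{OPT}=\max_{\emptyset\ne W\subseteq V_T}\rho(W)$ is the optimal value of the Temporal Motif Densest Subnetwork (TMDS) problem. *)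

(* Defs.v *)
From HB Require Import structures.
From mathcomp Require Import all_boot all_order all_algebra.
Set Implicit Arguments. Unset Strict Implicit. Unset Printing Implicit Defensive.
Import Order.TTheory GRing.Theory Num.Theory.
Local Open Scope ring_scope.

(* A temporal network on vertex type V (finite) is given by a finite type E of
   temporal edges with source, target and timestamp maps.  Distinct timestamps
   = injectivity of [time]; positive timestamps are assumed in the theorem. *)

Definition motif_weakly_connected (k l : nat) (mot : l.-tuple ('I_k * 'I_k)) : bool :=
  [forall a : 'I_k, forall b : 'I_k,
    connect [rel x y | ((x, y) \in mot) || ((y, x) \in mot)] a b].

Section TMDS.
Variables (V E : finType) (R : realFieldType).
Variables (src dst : E -> V) (time : E -> R).
Variables (k l : nat) (mot : l.-tuple ('I_k * 'I_k)) (delta : R).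
Variable (tau : l.-tuple E -> R).

Definition vertS (S : l.-tuple E) : {set V} :=
  [set v | has (fun e => (src e == v) || (dst e == v)) S].

Definition is_instance (S : l.-tuple E) : bool :=
  [&& [forall i : 'I_l, forall j : 'I_l,
         (i < j)%N ==> (time (tnth S i) < time (tnth S j))],
      (* t'_l - t'_1 <= delta  (stated for all pairs; equivalent given the order) *)
      [forall i : 'I_l, forall j : 'I_l,
         time (tnth S j) - time (tnth S i) <= delta] &
      [exists h : {ffun V -> 'I_k},
        [&& [forall i : 'I_l,
               (h (src (tnth S i)) == (tnth mot i).1) &&
               (h (dst (tnth S i)) == (tnth mot i).2)],
            [forall v in vertS S, forall w in vertS S, (h v == h w) ==> (v == w)] &
            [forall j : 'I_k, exists v in vertS S, h v == j]]]].

Definition tauW (W : {set V}) : R :=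
  \sum_(S : l.-tuple E | is_instance S && (vertS S \subset W)) tau S.

Definition degW (W : {set V}) (v : V) : R :=
  \sum_(S : l.-tuple E | [&& is_instance S, vertS S \subset W & v \in vertS S]) tau S.

Definition rho (W : {set V}) : R := tauW W / (#|W|%:R).

Variable xi : R.

Definition Lset (W' : {set V}) : {set V} :=
  [set v in W' | degW W' v <= (k%:R * (1 + xi)) * tauW W' / (#|W'|%:R)].

(* One iteration of the Batch loop on the state (W, W'); once W' is empty the
   loop has stopped, so the state is left unchanged. *)
Definition batch_step (s : {set V} * {set V}) : {set V} * {set V} :=
  let: (W, W') := s in
  if W' == set0 then (W, W') else
  let W'' := W' :\: Lset W' in
  if (W'' != set0) && (rho W <= rho W'') then (W'', W'') else (W, W'').

Definition batch_state (n : nat) : {set V} * {set V} :=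
  iter n batch_step (setT, setT).

End TMDS.

(* Main.v *)
Require Import Defs.
From HB Require Import structures.
From mathcomp Require Import all_boot all_order all_algebra.
From mathcomp Require Import lra.
Import Order.TTheory GRing.Theory Num.Theory.
Local Open Scope ring_scope.

Section Aux.
Variables (V E : finType) (R : realFieldType).
Variables (src dst : E -> V) (time : E -> R).
Variables (k l : nat) (mot : l.-tuple ('I_k * 'I_k)) (delta : R).
Variable (tau : l.-tuple E -> R).
Hypothesis taupos : forall S, is_instance src dst time mot delta S -> 0 < tau S.
Hypothesis l1 : (1 <= l)%N.

Local Notation inst := (is_instance src dst time mot delta).
Local Notation vS := (@vertS V E src dst l).
Local Notation tW := (tauW src dst time mot delta tau).
Local Notation dW := (degW src dst time mot delta tau).
Local Notation rh := (rho src dst time mot delta tau).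

Lemma card_vS S : inst S -> (#|vS S| <= k)%N.
Proof.
case/and3P=> _ _ /existsP [h /and3P [_ /forall_inP Hi _]].
rewrite -[k]card_ord; apply: (leq_card_in h) => v w Hv Hw Hvw.
by move: (Hi v Hv) => /forall_inP /(_ w Hw) /implyP /(_ (introT eqP Hvw)) /eqP.
Qed.

Lemma vS_n0 S : vS S != set0.
Proof.
apply/set0Pn; exists (src (tnth S (Ordinal l1))); rewrite inE.
by apply/hasP; exists (tnth S (Ordinal l1)); rewrite ?mem_tnth ?eqxx.
Qed.

Lemma tW0 : tW set0 = 0.
Proof.
rewrite /tauW big_pred0 // => S; rewrite subset0 (negbTE (vS_n0 S)); exact: andbF.
Qed.

Lemma tW_ge0 (W : {set V}) : 0 <= tW W.
Proof. by apply: sumr_ge0 => S /andP [H _]; apply/ltW/taupos. Qed.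

Lemma sum_deg (W : {set V}) : \sum_(v in W) dW W v <= k%:R * tW W.
Proof.
rewrite /degW /tauW.
under eq_bigr => v _ do rewrite (big_mkcond (fun S => [&& inst S, vS S \subset W & v \in vS S])).
rewrite exchange_big /= big_distrr /= [X in _ <= X]big_mkcond /=.
idtac.
apply: ler_sum => S _.
case HS: (inst S && (vS S \subset W)); last first.
  by rewrite big1 // => v _; move: HS; case: (inst S); case: (vS S \subset W).
case/andP: HS => HS1 HS2.
rewrite -big_mkcondr /= sumr_const mulr_natl.
apply: ler_wpMn2l; first exact/ltW/taupos.
have HH := card_vS _ HS1. apply: (leq_trans _ HH); apply: subset_leq_card.
by apply/subsetP => v; rewrite unfold_in /= => /and4P [_ _ _ ->].
Qed.

Lemma L_n0 xi (W : {set V}) : 0 <= xi -> W != set0 ->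
  Lset src dst time mot delta tau xi W != set0.
Proof.
move=> xi0 Wn0; apply/negP => /eqP HL.
have Hgt : forall v, v \in W ->
    k%:R * (1 + xi) * tW W / #|W|%:R < dW W v.
  move=> v vW; rewrite ltNge; apply/negP => Hle.
  have : v \in Lset src dst time mot delta tau xi W by rewrite inE vW Hle.
  by rewrite HL inE.
have cW : (0 < #|W|)%N by rewrite card_gt0.
have : \sum_(v in W) (k%:R * (1 + xi) * tW W / #|W|%:R) < \sum_(v in W) dW W v.
  apply: ltr_sum; last exact: Hgt.
  by case/set0Pn: Wn0 => v vW; apply/hasP; exists v; rewrite ?mem_index_enum.
rewrite sumr_const -[_ *+ #|W|]mulr_natr divfK; last by rewrite pnatr_eq0 -lt0n.
move=> H; have := lt_le_trans H (sum_deg W).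
have h3 : 0 <= k%:R * tW W * xi by rewrite mulr_ge0 // mulr_ge0 // tW_ge0.
rewrite mulrDr mulr1 mulrDl; lra.
Qed.

Lemma deg_mono (W1 W2 : {set V}) v : W1 \subset W2 -> dW W1 v <= dW W2 v.
Proof.
move=> sW; rewrite /degW [X in _ <= X]big_mkcond [X in X <= _]big_mkcond /=.
apply: ler_sum => S _.
case HS: (inst S); case Hv: (v \in vS S); case H1: (vS S \subset W1);
  case H2: (vS S \subset W2); rewrite /= ?andbF ?andbT //.
  by rewrite (subset_trans H1 sW) in H2.
by apply/ltW/taupos.
Qed.

Lemma tW_split (W : {set V}) v : tW W <= dW W v + tW (W :\ v).
Proof.
rewrite /tauW /degW (bigID (fun S => v \in vS S)) /=.
apply: lerD.
  by rewrite le_eqVlt; apply/orP; left; apply/eqP; apply: eq_bigl => S; rewrite andbA.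
rewrite [X in _ <= X]big_mkcond [X in X <= _]big_mkcond /=; apply: ler_sum => S _.
case HS: (inst S); case H1: (vS S \subset W); case Hv: (v \in vS S);
  rewrite /= ?andbF ?andbT //.
- by case: ifP => // _; apply/ltW/taupos.
- suff -> : vS S \subset W :\ v by [].
  apply/subsetP => w Hw; rewrite !inE (subsetP H1 _ Hw) andbT.
  by apply: contraTneq Hw => ->; rewrite Hv.
- by case: ifP => // _; apply/ltW/taupos.
- by case: ifP => // _; apply/ltW/taupos.
Qed.

Lemma deg_opt (Ws : {set V}) v : Ws != set0 -> (forall A, A != set0 -> rh A <= rh Ws) ->
  v \in Ws -> rh Ws <= dW Ws v.
Proof.
move=> Wn0 Hmax vW.
have := tW_split Ws v.
have Hc := cardsD1 v Ws; rewrite vW add1n in Hc.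
set m := #|Ws :\ v| in Hc.
have Ht : tW Ws = rh Ws * m.+1%:R.
  by rewrite /rho Hc divfK // pnatr_eq0.
have Hd : tW (Ws :\ v) <= rh Ws * m%:R.
  case: (boolP (Ws :\ v == set0)) => [/eqP -> | Hn].
    by rewrite tW0 mulr_ge0 // /rho divr_ge0 // tW_ge0.
  have := Hmax _ Hn; rewrite /rho -/m ler_pdivrMr //.
  by rewrite ltr0n lt0n /m cards_eq0.
rewrite Ht -natr1 mulrDr mulr1 => H; lra.
Qed.

End Aux.

Section Batch.
Variables (V E : finType) (R : realFieldType).
Variables (src dst : E -> V) (time : E -> R).
Variables (k l : nat) (mot : l.-tuple ('I_k * 'I_k)) (delta : R).
Variable (tau : l.-tuple E -> R) (xi : R).
Hypothesis taupos : forall S, is_instance src dst time mot delta S -> 0 < tau S.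
Hypothesis l1 : (1 <= l)%N.
Hypothesis xi0 : 0 < xi.

Local Notation bs := (batch_state src dst time mot delta tau xi).
Local Notation rh := (rho src dst time mot delta tau).
Local Notation Ls := (Lset src dst time mot delta tau xi).

Lemma bsS n : bs n.+1 = batch_step src dst time mot delta tau xi (bs n).
Proof. by rewrite /batch_state iterS. Qed.

Lemma bs2S n : (bs n.+1).2 =
  if (bs n).2 == set0 then set0 else (bs n).2 :\: Ls (bs n).2.
Proof.
rewrite bsS; case: (bs n) => W W' /=.
case: eqP => [-> //|_].
by case: ifP.
Qed.

Lemma bs_inv n : (bs n).2 != set0 -> rh (bs n).2 <= rh (bs n).1.
Proof.
elim: n => [|n IH]; first by rewrite /batch_state /= lexx.
rewrite bsS; case E0: (bs n) => [W W'].
rewrite E0 /= in IH; rewrite /batch_step.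
have [-> /= /eqP //|Hn] := eqVneq W' set0.
case: ifP => [_ _ /=|]; first exact: lexx.
move=> /negbT; rewrite negb_and negbK => /orP [/= -> //| H _ /=].
by rewrite -ltNge in H; apply: ltW.
Qed.

Lemma bs_mono n : rh (bs n).1 <= rh (bs n.+1).1.
Proof.
rewrite bsS; case: (bs n) => W W'; rewrite /batch_step.
have [-> /=|Hn] := eqVneq W' set0; first exact: lexx.
by case: ifP => /= [/andP [_ ->] | _] //; exact: lexx.
Qed.

Lemma bs_mono_le m n : (m <= n)%N -> rh (bs m).1 <= rh (bs n).1.
Proof.
elim: n => [|n IH]; first by rewrite leqn0 => /eqP ->.
rewrite leq_eqVlt => /orP [/eqP -> //| H].
exact: le_trans (IH H) (bs_mono n).
Qed.

Lemma bs_term n : (bs n).2 = set0 \/ (#|(bs n).2| + n <= #|V|)%N.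
Proof.
elim: n => [|n [IH|IH]]; first by right; rewrite addn0 /batch_state /= cardsT.
  by left; rewrite bs2S IH eqxx.
rewrite bs2S; case: eqP => [_|/eqP Hn]; first by left.
right; apply: leq_trans IH; rewrite addnS ltn_add2r.
have sL : Ls (bs n).2 \subset (bs n).2 by apply/subsetP => v; rewrite inE => /andP [].
have cL : (0 < #|Ls (bs n).2|)%N by rewrite card_gt0; apply: L_n0 => //; exact: ltW.
have cLW := subset_leq_card sL.
rewrite cardsD (setIidPr sL).
move: cL cLW; set a := #|Ls _|; set b := #|(bs n).2|; move=> cL cLW.
rewrite ltn_subrL cL /=; exact: leq_trans cL cLW.
Qed.

End Batch.

Arguments bs_term {V E R src dst time k l mot delta tau xi}.
Arguments bs2S {V E R src dst time k l mot delta tau xi}.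
Arguments bs_inv {V E R src dst time k l mot delta tau xi n}.
Arguments bs_mono_le {V E R src dst time k l mot delta tau xi m n}.
Arguments deg_opt {V E R src dst time k l mot delta tau}.
Arguments deg_mono {V E R src dst time k l mot delta tau}.
Arguments L_n0 {V E R src dst time k l mot delta tau}.

Lemma exit_lem (V E : finType) (R : realFieldType)
  (src dst : E -> V) (time : E -> R)
  (k l : nat) (mot : l.-tuple ('I_k * 'I_k)) (delta : R)
  (tau : l.-tuple E -> R) (xi : R) (Ws : {set V}) j :
  let bs := batch_state src dst time mot delta tau xi in
  Ws \subset (bs j).2 \/ exists m, (m < j)%N /\ Ws \subset (bs m).2 /\ ~~ (Ws \subset (bs m.+1).2).
Proof.
move=> bs; elim: j => [|j [IH|[m [H1 H2]]]].
- by left; rewrite /bs /batch_state /= subsetT.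
- case: (boolP (Ws \subset (bs j.+1).2)) => H; first by left.
  by right; exists j.
- by right; exists m; split => //; exact: ltnW.
Qed.

Theorem lemmaF4 (V E : finType) (R : realFieldType)
  (src dst : E -> V) (time : E -> R)
  (k l : nat) (mot : l.-tuple ('I_k * 'I_k)) (delta : R)
  (tau : l.-tuple E -> R) (xi : R) :
  injective time ->
  (forall e, 0 < time e) ->
  (2 <= k)%N -> (2 <= l)%N ->
  motif_weakly_connected mot ->
  0 < delta ->
  (forall S, is_instance src dst time mot delta S -> 0 < tau S) ->
  0 < xi ->
  (* in every iteration L(W') is nonempty *)
  (forall n, let W' := (batch_state src dst time mot delta tau xi n).2 in
     W' != set0 -> Lset src dst time mot delta tau xi W' != set0)
  (* the procedure terminates *)
  /\ (exists n, (batch_state src dst time mot delta tau xi n).2 = set0)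
  (* the output W satisfies rho(W) >= OPT / (k (1 + xi)) *)
  /\ (forall n, (batch_state src dst time mot delta tau xi n).2 = set0 ->
       forall W0 : {set V}, W0 != set0 ->
         rho src dst time mot delta tau W0 / (k%:R * (1 + xi))
           <= rho src dst time mot delta tau (batch_state src dst time mot delta tau xi n).1).
Proof.
move=> _ _ k2 l2 _ _ taupos xi0.
have l1 : (1 <= l)%N by exact: ltnW.
split; [|split].
- move=> n /= Hn; apply: L_n0 => //; exact: ltW.
- exists #|V|; case: (bs_term taupos xi0 #|V|) => // H.
  apply/eqP; rewrite -cards_eq0; move: H.
  by rewrite -[X in (_ <= X)%N]add0n leq_add2r leqn0.
- move=> n Hn W0 W0n.
  set P := [pred A : {set V} | A != set0].
  have PW0 : P W0 by [].
  case: (arg_maxP (rho src dst time mot delta tau) PW0) => Ws PWs Hmax.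
  have Wsn : Ws != set0 by [].
  have Hmax' : forall A, A != set0 -> rho src dst time mot delta tau A <= rho src dst time mot delta tau Ws.
    by move=> A HA; exact: Hmax.
  have c0 : 0 < k%:R * (1 + xi) :> R.
    by rewrite mulr_gt0 // ?ltr0n; [apply: leq_trans k2 | rewrite addr_gt0].
  rewrite ler_pdivrMr //.
  case: (exit_lem _ _ _ src dst time _ _ mot delta tau xi Ws n) => /= [|[m [Hmn [H1 H2]]]].
    by rewrite Hn subset0 (negbTE Wsn).
  case/subsetPn: H2 => v vWs vn.
  have vW' := subsetP H1 v vWs.
  have W'n : (batch_state src dst time mot delta tau xi m).2 != set0.
    by apply/set0Pn; exists v.
  rewrite bs2S (negbTE W'n) inE vW' andbT negbK in vn.
  move: vn; rewrite inE vW' /= => Hv.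
  have h1 := deg_opt taupos l1 _ _ Wsn Hmax' vWs.
  have h2 := deg_mono taupos _ _ v H1.
  have h3 := bs_inv W'n.
  have h4 := @bs_mono_le V E R src dst time k l mot delta tau xi _ _ (ltnW Hmn).
  have h5 := Hmax' _ W0n.
  rewrite -mulrA -/(rho _ _ _ _ _ _ _) in Hv.
  set r1 := rho _ _ _ _ _ _ W0 in h5 *.
  set r2 := rho _ _ _ _ _ _ Ws in h1 h5.
  set r3 := rho _ _ _ _ _ _ (batch_state _ _ _ _ _ _ _ m).2 in h3 Hv.
  set r4 := rho _ _ _ _ _ _ (batch_state _ _ _ _ _ _ _ m).1 in h3 h4.
  set r5 := rho _ _ _ _ _ _ (batch_state _ _ _ _ _ _ _ n).1 in h4 *.
  set c := k%:R * (1 + xi) in c0 Hv *.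
  have : c * r3 <= c * r5 by apply: ler_wpM2l; [exact: ltW | exact: le_trans h3 h4].
  move=> h6; rewrite mulrC.
  apply: le_trans h5 _; apply: le_trans h1 _; apply: le_trans h2 _.
  exact: le_trans Hv h6.
Qed.
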